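(* Let $G$ be a connected graph with $n\geq 6$ vertices that has at least one basis forced vertex. Then $|E(G)|\leq \frac{n(n-1)}{2}-4$. Moreover, if $|E(G)|=\frac{n(n-1)}{2}-4$, then the complement $\overline{G}$ is isomorphic to the disjoint union of the path $P_5$ (on 5 vertices) and $n-5$ isolated vertices, and $G$ has exactly two basis forced vertices.
   Context: All graphs are finite and simple. For vertices $u,v$ of a connected graph $G$, $d(u,v)$ is the length of a shortest $u$–$v$ path. A set $R\subseteq V(G)$ is a resolving set if for all distinct $x,y\in V(G)$ there is $r\in R$ with $d(r,x)\neq d(r,y)$. The metric dimension $\dim(G)$ is the minimum cardinality of a resolving set, and a resolving set of cardinality $\dim(G)$ is a metric basis. A vertex is a basis forced vertex if it belongs to every metric basis of $G$. $\overline{G}$ denotes the complement graph of $G$. *)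

(* Defs.v *)
From mathcomp Require Import all_boot.
Set Implicit Arguments. Unset Strict Implicit. Unset Printing Implicit Defensive.

Section Graph.
Variables (T : finType) (e : rel T).

Definition simple_graph : Prop := symmetric e /\ irreflexive e.

Definition connected_graph : Prop := forall u v : T, connect e u v.

Definition walk_of_len (u v : T) (k : nat) : bool :=
  [exists p : k.-tuple T, path e u p && (last u p == v)].

(* d(u,v): least k with a u-v walk of length k (shortest walks are paths).
   In a connected graph such k exists and is < #|T|; otherwise #|T|. *)
Definition dist (u v : T) : nat := find (walk_of_len u v) (iota 0 #|T|).

Definition resolving (R : {set T}) : Prop :=
  forall x y : T, x != y -> exists2 r, r \in R & dist r x != dist r y.

Definition metric_basis (R : {set T}) : Prop :=
  resolving R /\ forall S : {set T}, resolving S -> #|R| <= #|S|.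

Definition basis_forced (v : T) : Prop :=
  forall R : {set T}, metric_basis R -> v \in R.

Definition edge_set : {set {set T}} :=
  [set [set x; y] | x in T, y in T & e x y].

Definition compl_rel : rel T := fun x y => (x != y) && ~~ e x y.
End Graph.

(* P_5 on vertices 0..4 plus isolated vertices 5..n-1, on 'I_n *)
Definition P5_plus_isolated (n : nat) : rel 'I_n :=
  fun i j => [&& (i < 5)%N, (j < 5)%N & ((val i == (val j).+1) || (val j == (val i).+1))].

Definition graph_iso (T U : finType) (e1 : rel T) (e2 : rel U) : Prop :=
  exists f : T -> U, bijective f /\ forall x y, e2 (f x) (f y) = e1 x y.

(* Main.v *)
Require Import Defs.
From mathcomp Require Import all_boot zify.
From Stdlib Require Import Classical.
Set Implicit Arguments. Unset Strict Implicit. Unset Printing Implicit Defensive.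

Section Basics.
Variables (T : finType).

Lemma mem_edge (r : rel T) A :
  reflect (exists x y, r x y /\ A = [set x; y]) (A \in edge_set r).
Proof.
apply: (iffP imset2P).
  by case=> x y _; rewrite inE => rxy ->; exists x, y.
by case=> x [y [rxy ->]]; apply: (Imset2spec (x2:=y)) => //; rewrite inE.
Qed.

Lemma set2_eq (a b c d : T) : [set a; b] = [set c; d] ->
  (a = c /\ b = d) \/ (a = d /\ b = c).
Proof.
move=> E.
have ha : a \in [set c; d] by rewrite -E set21.
have hb : b \in [set c; d] by rewrite -E set22.
have hc : c \in [set a; b] by rewrite E set21.
have hd : d \in [set a; b] by rewrite E set22.
case/set2P: hc => hc; case/set2P: hd => hd; subst; auto.
- case/set2P: hb => ->; auto.
- case/set2P: ha => ->; auto.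
Qed.

Variable e : rel T.
Hypothesis hsimple : simple_graph e.
Let esym := proj1 hsimple.
Let eirr := proj2 hsimple.
Local Notation H := (compl_rel e).

Lemma edge_count : #|edge_set e| + #|edge_set H| = #|T| * (#|T| - 1) %/ 2.
Proof.
have -> : #|T| * (#|T| - 1) %/ 2 = #|[set A : {set T} | #|A| == 2]|.
  by rewrite card_draws bin2 -divn2 subn1.
have I0 : edge_set e :&: edge_set H = set0.
  apply/setP=> A; rewrite !inE; apply/negbTE/andP => [[/mem_edge [x [y [exy ->]]]]].
  move/mem_edge => [x' [y' [/andP [_ hn] /set2_eq [] [E1 E2]]]]; subst.
    by rewrite exy in hn.
  by rewrite esym exy in hn.
rewrite -cardsUI I0 cards0 addn0; apply: eq_card => A; rewrite !inE.
apply/idP/idP.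
  case/orP => /mem_edge [x [y [hxy ->]]].
    have nxy : x != y by apply/eqP => E; subst; rewrite eirr in hxy.
    by rewrite cards2 nxy.
  by case/andP: hxy => nxy _; rewrite cards2 nxy.
case/cards2P => x [y [nxy ->]].
case exy: (e x y).
  by apply/orP; left; apply/mem_edge; exists x, y.
by apply/orP; right; apply/mem_edge; exists x, y; rewrite /compl_rel nxy exy.
Qed.

Lemma walk0 x y : walk_of_len e x y 0 = (x == y).
Proof.
apply/existsP/idP.
  by case=> p; rewrite (tuple0 p) /=.
by move=> hxy; exists [tuple]; rewrite /= hxy.
Qed.

Lemma walk1 x y : walk_of_len e x y 1 = e x y.
Proof.
apply/existsP/idP.
  case=> -[[|z [|]]] //= _; by rewrite andbT => /andP [h /eqP <-].
by move=> hxy; exists [tuple y]; rewrite /= hxy eqxx.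
Qed.

Lemma walk2 x y z : e x z -> e z y -> walk_of_len e x y 2.
Proof.
by move=> h1 h2; apply/existsP; exists [tuple z; y]; rewrite /= h1 h2 eqxx.
Qed.

Definition diam2 := forall x y, x != y -> ~~ e x y -> exists z, e x z && e z y.

Definition D x y := if x == y then 0 else if e x y then 1 else 2.

Lemma dist_formula : diam2 -> 3 <= #|T| -> forall x y, dist e x y = D x y.
Proof.
move=> hd hT x y; rewrite /dist /D.
have -> : #|T| = (#|T| - 3).+3 by lia.
rewrite /= walk0 walk1.
case: eqP => [//|/eqP nxy]; case exy: (e x y) => //.
have [z /andP [h1 h2]] := hd x y nxy (negbT exy).
by rewrite (walk2 h1 h2).
Qed.

End Basics.
Section Diam.
Variables (T : finType) (e : rel T).
Hypothesis hsimple : simple_graph e.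
Let esym := proj1 hsimple.
Let eirr := proj2 hsimple.
Local Notation H := (compl_rel e).

Lemma H_edge x y : H x y -> [set x; y] \in edge_set H.
Proof. by move=> h; apply/mem_edge; exists x, y. Qed.

Lemma get_diam2 : #|edge_set H| <= 4 -> 6 <= #|T| -> diam2 e.
Proof.
move=> hE hT x y nxy nexy.
apply: NNPP => hno.
have hall : forall z, ~~ (e x z && e z y).
  by move=> z; apply/negP => h; apply: hno; exists z.
pose B := [set z | [&& z != x, z != y & H x z || H y z]].
pose f z := if H x z then [set x; z] else [set y; z].
have finj : {in B &, injective f}.
  move=> z1 z2; rewrite !inE /f => /and3P [n1x n1y _] /and3P [n2x n2y _].
  case: (H x z1); case: (H x z2) => E.
  - by have := set22 x z1; rewrite E => /set2P [] h //; rewrite h eqxx in n1x.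
  - by have := set21 x z1; rewrite E => /set2P [] h //; [rewrite h eqxx in nxy | rewrite h eqxx in n2x].
  - by have := set21 y z1; rewrite E => /set2P [] h //; [rewrite h eqxx in nxy | rewrite h eqxx in n2y].
  - by have := set22 y z1; rewrite E => /set2P [] h //; rewrite h eqxx in n1y.
have hsub : f @: B \subset edge_set H :\ [set x; y].
  apply/subsetP => A /imsetP [z]; rewrite inE => /and3P [nzx nzy hz] ->.
  rewrite !inE /f; apply/andP; split.
    apply/negP => /eqP E.
    have : z \in [set x; y].
      by rewrite -E; case: (H x z); rewrite set22.
    by case/set2P => h; [rewrite h eqxx in nzx | rewrite h eqxx in nzy].
  case hx: (H x z); first exact: H_edge.
  by rewrite hx /= in hz; exact: H_edge.
have cB : #|B| <= 3.
  rewrite -(card_in_imset finj); apply: leq_trans (subset_leq_card hsub) _.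
  have hxy : [set x; y] \in edge_set H by apply: H_edge; rewrite /compl_rel nxy.
  by move: hE; rewrite (cardsD1 [set x; y]) hxy /= add1n.
have hC : ~: [set x; y] \subset B.
  apply/subsetP => z; rewrite !inE negb_or => /andP [nzx nzy]; rewrite nzx nzy /=.
  have := hall z; rewrite negb_and /compl_rel => /orP [h|h].
    by rewrite /compl_rel eq_sym nzx h.
  by rewrite /compl_rel (eq_sym y) nzy (esym y z) h orbT.
have := subset_leq_card hC.
have := cardsC [set x; y]; rewrite cards2 nxy.
lia.
Qed.

Definition resb (R : {set T}) : bool :=
  [forall x, forall y, [&& x != y, x \notin R & y \notin R] ==>
     [exists r in R, e r x != e r y]].

Lemma resbE R : resb R -> forall x y, x != y -> x \notin R -> y \notin R ->
  exists2 r, r \in R & e r x != e r y.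
Proof.
move=> /forallP h x y nxy hx hy; move: (h x) => /forallP /(_ y).
by rewrite nxy hx hy /= => /exists_inP [r hr hne]; exists r.
Qed.

Lemma nresbE R : ~~ resb R -> exists x y, [/\ x != y, x \notin R, y \notin R &
  forall r, r \in R -> e r x = e r y].
Proof.
move=> /forallPn [x /forallPn [y]]; rewrite negb_imply => /andP [/and3P [nxy hx hy]].
move=> /exists_inPn h; exists x, y; split => // r hr.
by apply/eqP; rewrite -[_ == _]negbK h.
Qed.

Lemma resolvingE : diam2 e -> 3 <= #|T| -> forall R, resolving e R <-> resb R.
Proof.
move=> hd hT R; have df := dist_formula hd hT.
split.
  move=> hr; apply/forallP => x; apply/forallP => y; apply/implyP => /and3P [nxy hx hy].
  have [r hrR] := hr x y nxy; rewrite !df /D.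
  have -> : (r == x) = false by apply/negbTE; apply: contraNneq hx => <-.
  have -> : (r == y) = false by apply/negbTE; apply: contraNneq hy => <-.
  move=> hne; apply/exists_inP; exists r => //.
  by move: hne; case: (e r x); case: (e r y).
move=> hb x y nxy.
case hx: (x \in R).
  by exists x => //; rewrite !df /D eqxx (negbTE nxy); case: (e x y).
case hy: (y \in R).
  by exists y => //; rewrite !df /D eqxx (eq_sym y x) (negbTE nxy); case: (e y x).
have [r hr hne] := resbE hb nxy (negbT hx) (negbT hy).
exists r => //; rewrite !df /D.
have -> : (r == x) = false by apply/negbTE; apply: contraNneq (negbT hx) => <-.
have -> : (r == y) = false by apply/negbTE; apply: contraNneq (negbT hy) => <-.
by move: hne; case: (e r x); case: (e r y).
Qed.

End Diam.
Section Core.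
Variables (T : finType) (e : rel T).
Hypothesis esym : symmetric e.
Variables (R : {set T}) (v : T).
Hypothesis hres : resb e R.
Hypothesis hv : v \in R.
Hypothesis hswap : forall u, u \notin R -> ~~ resb e (u |: (R :\ v)).
Hypothesis hmin : ~~ resb e (R :\ v).

Definition crit x y := [/\ x \notin R, y \notin R, ~~ e v x, e v y &
  forall r, r \in R -> r != v -> e r x = e r y].
Definition Yp b := b \notin R /\ forall r, r \in R -> r != v -> e r v = e r b.

Lemma swap_spec u : u \notin R ->
  (exists b, [/\ Yp b, b != u & e u v = e u b]) \/
  (exists x y, [/\ crit x y, x != u, y != u & e u x = e u y]).
Proof.
move=> hu; have [a [b [nab ha hb hr]]] := nresbE (hswap hu).
have inR' r : r \in R -> r != v -> r \in u |: (R :\ v).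
  by move=> h1 h2; rewrite !inE h1 h2 orbT.
have uR' : u \in u |: (R :\ v) by rewrite !inE eqxx.
move: ha hb; rewrite !inE !negb_or !negb_and !negbK.
case/andP => nau ha; case/andP => nbu hb.
case: (eqVneq a v) => [eav | nav].
  subst a; left; exists b; split => //; last exact: hr.
  split; first by move: hb; rewrite (eq_sym b v) (negbTE nab).
  by move=> r h1 h2; apply: hr (inR' r h1 h2).
case: (eqVneq b v) => [ebv | nbv].
  subst b; left; exists a; split => //; last by rewrite (hr u uR').
  split; first by move: ha; rewrite (negbTE nav).
  by move=> r h1 h2; rewrite (hr r (inR' r h1 h2)).
move: ha hb; rewrite (negbTE nav) (negbTE nbv) /= => ha hb.
have [r hrR hne] := resbE hres nab ha hb.
have rv : r = v.
  by case: (eqVneq r v) => // h; rewrite (hr r (inR' r hrR h)) eqxx in hne.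
subst r; right.
case eva: (e v a).
  exists b, a; split => //; last by rewrite (hr u uR').
  split => //; first by move: hne; rewrite eva; case: (e v b).
  by move=> r h1 h2; rewrite (hr r (inR' r h1 h2)).
exists a, b; split => //; last exact: hr.
split => //; first by rewrite eva.
  by move: hne; rewrite eva; case: (e v b).
by move=> r h1 h2; rewrite (hr r (inR' r h1 h2)).
Qed.

Lemma F1 b b' : Yp b -> Yp b' -> b != b' -> crit b b' \/ crit b' b.
Proof.
move=> [hb Hb] [hb' Hb'] nbb.
have [r hrR hne] := resbE hres nbb hb hb'.
have rv : r = v.
  by case: (eqVneq r v) => // h; rewrite -(Hb r hrR h) -(Hb' r hrR h) eqxx in hne.
subst r.
have hc : forall r, r \in R -> r != v -> e r b = e r b'.
  by move=> r h1 h2; rewrite -(Hb r h1 h2) -(Hb' r h1 h2).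
case evb: (e v b).
  right; split => //; first by move: hne; rewrite evb; case: (e v b').
  by move=> r h1 h2; rewrite hc.
by left; split => //; [rewrite evb | move: hne; rewrite evb; case: (e v b')].
Qed.

Lemma F2a x x' y : crit x y -> crit x' y -> x = x'.
Proof.
move=> [hx hy nx ey cx] [hx' _ nx' _ cx'].
apply/eqP; apply: contraT => nxx.
have [r hrR hne] := resbE hres nxx hx hx'.
case: (eqVneq r v) => [rv | nrv].
  by subst r; move: hne nx nx'; case: (e v x); case: (e v x').
by rewrite (cx r hrR nrv) (cx' r hrR nrv) eqxx in hne.
Qed.

Lemma F2b x y y' : crit x y -> crit x y' -> y = y'.
Proof.
move=> [hx hy nx ey cy] [_ hy' _ ey' cy'].
apply/eqP; apply: contraT => nyy.
have [r hrR hne] := resbE hres nyy hy hy'.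
case: (eqVneq r v) => [rv | nrv].
  by subst r; rewrite ey ey' in hne.
by rewrite -(cy r hrR nrv) -(cy' r hrR nrv) eqxx in hne.
Qed.

Lemma min_spec : (exists b, Yp b) \/ (exists x y, crit x y).
Proof.
have [a [b [nab ha hb hr]]] := nresbE hmin.
move: ha hb; rewrite !inE !negb_and !negbK.
case: (eqVneq a v) => [eav | nav] /= ha.
  subst a => hb; left; exists b; split; first by move: hb; rewrite (eq_sym b v) (negbTE nab).
  by move=> r h1 h2; apply: hr; rewrite !inE h1 h2.
case: (eqVneq b v) => [ebv | nbv] /= hb.
  subst b; left; exists a; split => //.
  by move=> r h1 h2; rewrite (hr r) // !inE h1 h2.
right.
have [r hrR hne] := resbE hres nab ha hb.
have rv : r = v.
  by case: (eqVneq r v) => // h; rewrite (hr r) ?eqxx // !inE hrR h in hne.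
subst r.
have hc : forall r, r \in R -> r != v -> e r a = e r b.
  by move=> r h1 h2; rewrite (hr r) // !inE h1 h2.
case eva: (e v a).
  exists b, a; split => //; first by move: hne; rewrite eva; case: (e v b).
  by move=> r h1 h2; rewrite hc.
by exists a, b; split => //; [rewrite eva | move: hne; rewrite eva; case: (e v b)].
Qed.

Lemma two_crit : exists x1 y1 x2 y2, [/\ crit x1 y1, crit x2 y2 & x1 != x2].
Proof.
apply: NNPP => hno.
have uniq_x : forall x1 y1 x2 y2, crit x1 y1 -> crit x2 y2 -> x1 = x2.
  move=> x1 y1 x2 y2 c1 c2; apply/eqP; apply: contraT => n.
  by exfalso; apply: hno; exists x1, y1, x2, y2.
case: (classic (exists x y, crit x y)) => [[x1 [y1 c1]] | nocrit].
  have only : forall x y, crit x y -> x = x1 /\ y = y1.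
    move=> x y c; have ex := uniq_x _ _ _ _ c c1; subst x.
    by split => //; apply: F2b c c1.
  have [hx1 hy1 nx1 ey1 _] := c1.
  have [[b [Yb nb ev1]] | [x [y [c nx _ _]]]] := swap_spec hx1; last first.
    by have [ex _] := only x y c; rewrite ex eqxx in nx.
  have [[b' [Yb' nb' ev2]] | [x [y [c _ ny _]]]] := swap_spec hy1; last first.
    by have [_ ey] := only x y c; rewrite ey eqxx in ny.
  have e1 : e x1 b = false by rewrite -ev1 esym (negbTE nx1).
  have e2 : e y1 b' = true by rewrite -ev2 esym ey1.
  case: (eqVneq b b') => [ebb | nbb].
    subst b'.
    have [[b'' [Yb'' nb'' _]] | [x [y [c nx ny exy]]]] := swap_spec (proj1 Yb).
      have nbb : b != b'' by rewrite eq_sym.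
      have [c|c] := F1 Yb Yb'' nbb.
      - by have [E _] := only _ _ c; rewrite E eqxx in nb.
      - by have [_ E] := only _ _ c; rewrite E eqxx in nb'.
    have [ex ey] := only x y c; subst x y.
    by move: exy; rewrite esym e1 esym e2.
  have [c|c] := F1 Yb Yb' nbb.
    by have [E _] := only _ _ c; rewrite E eqxx in nb.
  have [E1 E2] := only _ _ c; subst b b'.
  by move: e1; rewrite esym e2.
have [[b0 Y0] | [x [y c]]] := min_spec; last by apply: nocrit; exists x, y.
have [[b [Yb nb _]] | [x [y [c _ _ _]]]] := swap_spec (proj1 Y0); last first.
  by apply: nocrit; exists x, y.
by have [c|c] := F1 Yb Y0 nb; apply: nocrit; [exists b, b0 | exists b0, b].
Qed.

Lemma core : exists x1 x2 y2 r,
  [/\ x1 \notin R, x2 \notin R, y2 \notin R, r \in R & r != v] /\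
  [/\ x1 != x2, ~~ e v x1, ~~ e v x2, e v y2 & ~~ e r x2 && ~~ e r y2].
Proof.
have [x1 [y1 [x2 [y2 [c1 c2 nx]]]]] := two_crit.
have ny : y1 != y2.
  by apply: contra nx => /eqP E; subst y2; rewrite (F2a c1 c2).
have [hx1 hy1 nx1 ey1 C1] := c1.
have [hx2 hy2 nx2 ey2 C2] := c2.
have [r hr hne] := resbE hres ny hy1 hy2.
case er1: (e r y1).
  have er2 : e r y2 = false by move: hne; rewrite er1; case: (e r y2).
  have nrv : r != v by apply/eqP => E; subst r; rewrite ey2 in er2.
  exists x1, x2, y2, r; split; split => //.
  by rewrite C2 // er2.
have nrv : r != v by apply/eqP => E; subst r; rewrite ey1 in er1.
exists x2, x1, y1, r; split; split => //; first by rewrite eq_sym.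
by rewrite C1 // er1.
Qed.

End Core.
Section Main.
Variables (T : finType) (e : rel T).
Hypothesis hsimple : simple_graph e.
Hypothesis hT : 6 <= #|T|.
Let esym := proj1 hsimple.
Let eirr := proj2 hsimple.
Local Notation H := (compl_rel e).

Lemma hT3 : 3 <= #|T|. Proof. by apply: leq_trans hT. Qed.

Lemma basis_exists : diam2 e -> exists R, metric_basis e R.
Proof.
move=> hd.
have r0 : resb e setT by apply/forallP => x; apply/forallP => y; rewrite inE andbF.
case: (arg_minnP (fun R : {set T} => #|R|) r0) => R hR hm.
exists R; split; first by apply/(resolvingE hd hT3).
by move=> S /(resolvingE hd hT3) hS; apply: hm.
Qed.

Lemma Hsym a b : H a b = H b a.
Proof. by rewrite /compl_rel eq_sym esym. Qed.

Definition core_out v x1 x2 y2 r :=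
  [/\ x1 != v, x2 != v, y2 != v, x1 != r & x2 != r] /\
  [/\ y2 != r, r != v, x1 != x2, x1 != y2 & x2 != y2] /\
  [/\ H v x1, H v x2, H r x2, H r y2 & e v y2].

Lemma forced_core v : diam2 e -> basis_forced e v ->
  exists R, metric_basis e R /\ exists x1 x2 y2 r,
    [/\ x1 \notin R, x2 \notin R, y2 \notin R & r \in R] /\ core_out v x1 x2 y2 r.
Proof.
move=> hd hf.
have [R hR] := basis_exists hd.
have hv := hf R hR.
have RE := resolvingE hd hT3.
have hres : resb e R by apply/RE; case: hR.
have hswap : forall u, u \notin R -> ~~ resb e (u |: (R :\ v)).
  move=> u hu; apply/negP => /RE hr.
  have : metric_basis e (u |: (R :\ v)).
    split => // S hS.
    have hu' : u \notin R :\ v by rewrite inE negb_and hu orbT.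
    rewrite cardsU1 hu' /=.
    by case: hR => _ /(_ S hS); rewrite (cardsD1 v R) hv.
  move/hf; rewrite !inE eqxx /= orbF => /eqP E; subst u.
  by rewrite hv in hu.
have hmin : ~~ resb e (R :\ v).
  apply/negP => /RE hr; case: hR => _ /(_ _ hr).
  by rewrite (cardsD1 v R) hv ltnn.
exists R; split => //.
have [x1 [x2 [y2 [r [[h1 h2 h3 h4 h5] [n12 n1 n2 ey2 /andP [nr2 nry]]]]]]] :=
  core esym hres hswap hmin.
have nin a b : a \notin R -> b \in R -> a != b.
  by move=> ha hb; apply: contraNneq ha => ->.
exists x1, x2, y2, r; split => //.
split; [split | split; [split|split]].
all: try (by apply: nin).
all: try (by rewrite eq_sym; apply: nin).
- by [].
- by [].
- by apply: contraNneq n1 => ->.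
- by apply: contraNneq n2 => ->.
- by rewrite /compl_rel n1 andbT eq_sym nin.
- by rewrite /compl_rel n2 andbT eq_sym nin.
- by rewrite /compl_rel nr2 andbT eq_sym nin.
- by rewrite /compl_rel nry andbT eq_sym nin.
- by [].
Qed.

Lemma neq2l (a b : T) (B : {set T}) : a \notin B -> [set a; b] != B.
Proof. by move=> h; apply: contraNneq h => <-; rewrite set21. Qed.
Lemma neq2r (a b : T) (B : {set T}) : b \notin B -> [set a; b] != B.
Proof. by move=> h; apply: contraNneq h => <-; rewrite set22. Qed.

Lemma four_edges v x1 x2 y2 r : core_out v x1 x2 y2 r ->
  let s := [:: [set v; x1]; [set v; x2]; [set r; x2]; [set r; y2]] in
  uniq s /\ {subset s <= edge_set H}.
Proof.
rewrite /core_out; move=> [[d1 d2 d3 d4 d5] [[d6 d7 d8 d9 d10] [h1 h2 h3 h4 _]]].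
have d1' := d1; rewrite eq_sym in d1'.
have d2' := d2; rewrite eq_sym in d2'.
have d3' := d3; rewrite eq_sym in d3'.
have d4' := d4; rewrite eq_sym in d4'.
have d5' := d5; rewrite eq_sym in d5'.
have d6' := d6; rewrite eq_sym in d6'.
have d7' := d7; rewrite eq_sym in d7'.
have d8' := d8; rewrite eq_sym in d8'.
have d9' := d9; rewrite eq_sym in d9'.
have d10' := d10; rewrite eq_sym in d10'.
split.
  rewrite /= !inE !negb_or -!andbA andbT; repeat (apply/andP; split).
  all: try first [ by apply: neq2l; rewrite !inE !negb_or ?d1 ?d1' ?d2 ?d2' ?d3 ?d3' ?d4 ?d4' ?d5 ?d5' ?d6 ?d6' ?d7 ?d7' ?d8 ?d8' ?d9 ?d9' ?d10 ?d10'
              | by apply: neq2r; rewrite !inE !negb_or ?d1 ?d1' ?d2 ?d2' ?d3 ?d3' ?d4 ?d4' ?d5 ?d5' ?d6 ?d6' ?d7 ?d7' ?d8 ?d8' ?d9 ?d9' ?d10 ?d10' ].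
move=> A; rewrite !inE => /orP [/eqP ->|/orP [/eqP ->|/orP [/eqP ->|/eqP ->]]].
all: by apply: H_edge.
Qed.


Ltac crunch := rewrite ?eqxx ?andbT ?andbF ?orbF ?orbT /=; repeat (first [
   match goal with h : is_true (?a != ?b) |- context [?a == ?b] => rewrite (negbTE h) end
 | match goal with h : is_true (?a != ?b) |- context [?b == ?a] => rewrite (eq_sym b a) (negbTE h) end ];
   rewrite ?eqxx ?andbT ?andbF ?orbF ?orbT /=).

Lemma in_edges_s v x1 x2 y2 r : core_out v x1 x2 y2 r -> #|edge_set H| = 4 ->
  forall A, A \in edge_set H ->
  A \in [:: [set v; x1]; [set v; x2]; [set r; x2]; [set r; y2]].
Proof.
move=> hco hF A hA; apply: contraT => nA.
have [us sub] := four_edges hco.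
have U : uniq (A :: [:: [set v; x1]; [set v; x2]; [set r; x2]; [set r; y2]]).
  by rewrite /= nA.
have S : {subset A :: [:: [set v; x1]; [set v; x2]; [set r; x2]; [set r; y2]]
          <= enum (edge_set H)}.
  move=> B; rewrite in_cons mem_enum => /orP [/eqP -> //|]; exact: sub.
by have := uniq_leq_size U S; rewrite -cardE hF.
Qed.

Section Exact.
Variables (v x1 x2 y2 r : T).
Hypothesis hco : core_out v x1 x2 y2 r.
Hypothesis hF : #|edge_set H| = 4.

Lemma Hchar a b : H a b = [|| (a==v)&&(b==x1), (a==x1)&&(b==v), (a==v)&&(b==x2),
  (a==x2)&&(b==v), (a==r)&&(b==x2), (a==x2)&&(b==r), (a==r)&&(b==y2) | (a==y2)&&(b==r)].
Proof.
have [_ [_ [h1 h2 h3 h4 _]]] := hco.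
apply/idP/idP.
  move=> hab; have := in_edges_s hco hF (H_edge hab).
  rewrite !inE => /orP [/eqP E|/orP [/eqP E|/orP [/eqP E|/eqP E]]].
  1-4: by case: (set2_eq E) => -[-> ->]; rewrite !eqxx /= ?orbT.
do 7 (case/orP => [/andP [/eqP -> /eqP ->]|]; first by rewrite // Hsym).
by case/andP => /eqP -> /eqP ->; rewrite Hsym.
Qed.

Lemma Hsupp a b : H a b -> a \in [:: x1; v; x2; r; y2].
Proof.
rewrite Hchar !inE.
case: (a == v); case: (a == x1); case: (a == x2); case: (a == r); case: (a == y2);
  by rewrite /= ?orbT.
Qed.


Lemma iso_P5 : graph_iso H (@P5_plus_isolated #|T|).
Proof.
have [[d1 d2 d3 d4 d5] [[d6 d7 d8 d9 d10] _]] := hco.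
pose s1 := [:: x1; v; x2; r; y2].
pose s := s1 ++ [seq z <- enum T | z \notin s1].
have us : uniq s.
  rewrite cat_uniq filter_uniq ?enum_uniq // andbT; apply/andP; split.
    by rewrite /s1 /= !inE !negb_or; crunch.
  by apply/hasPn => z; rewrite mem_filter => /andP [].
have ins : forall z, z \in s.
  by move=> z; rewrite mem_cat mem_filter mem_enum andbT; case: (z \in s1).
have sz : size s = #|T|.
  by rewrite -(card_uniqP us) cardT -(eq_cardT (A := mem s)).
have fI : forall z, index z s < #|T| by move=> z; rewrite -sz index_mem.
exists (fun z => Ordinal (fI z)); split.
  exists (fun i : 'I_#|T| => nth x1 s i).
    by move=> z /=; apply: nth_index.
  by move=> i; apply: val_inj; apply: index_uniq => //; rewrite sz.
have idx : forall z, z \in s1 -> index z s = index z s1.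
  by move=> z hz; rewrite index_cat hz.
have nidx : forall z, z \notin s1 -> 5 <= index z s.
  by move=> z hz; rewrite index_cat (negbTE hz).
clearbody s.
move=> a b; rewrite /P5_plus_isolated /=.
case ha: (a \in s1); last first.
  rewrite ltnNge nidx ?ha //=; symmetry; apply/negbTE; apply/negP => /Hsupp.
  by rewrite -/s1 ha.
case hb: (b \in s1); last first.
  rewrite [index b s < 5]ltnNge (nidx b) ?hb //= andbF; symmetry; apply/negbTE; apply/negP.
  by rewrite Hsym => /Hsupp; rewrite -/s1 hb.
rewrite !idx //.
move: ha hb; rewrite !inE.
by do 2 (case/orP => [/eqP ->|]; [|case/orP => [/eqP ->|]; [|case/orP => [/eqP ->|];
  [|case/orP => [/eqP ->|/eqP ->]]]]); rewrite Hchar; crunch.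
Qed.


Definition sig a := if a == x1 then y2 else if a == y2 then x1
  else if a == v then r else if a == r then v else a.

Ltac case5 a := case: (eqVneq a x1) => [->|?]; [|case: (eqVneq a y2) => [->|?];
  [|case: (eqVneq a v) => [->|?]; [|case: (eqVneq a r) => [->|?]]]].

Lemma sigK : cancel sig sig.
Proof.
have [[d1 d2 d3 d4 d5] [[d6 d7 d8 d9 d10] _]] := hco.
by move=> a; rewrite /sig; case5 a; crunch.
Qed.

Lemma sigH a b : H (sig a) (sig b) = H a b.
Proof.
have [[d1 d2 d3 d4 d5] [[d6 d7 d8 d9 d10] _]] := hco.
by rewrite /sig; case5 a; case5 b; rewrite !Hchar; crunch.
Qed.

Lemma sigE a b : e (sig a) (sig b) = e a b.
Proof.
case: (eqVneq a b) => [->|nab]; first by rewrite !eirr.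
have ns : sig a != sig b.
  by apply: contra nab => /eqP h; rewrite -(sigK a) h sigK.
by have := sigH a b; rewrite /compl_rel nab ns /= => /negb_inj.
Qed.

Lemma forced_pair : diam2 e -> basis_forced e v ->
  forall w, basis_forced e w <-> w = v \/ w = r.
Proof.
move=> hd hfv.
have [[d1 d2 d3 d4 d5] [[d6 d7 d8 d9 d10] [h1 h2 h3 h4 _]]] := hco.
have RE := resolvingE hd hT3.
have sinj : injective sig := can_inj sigK.
have fr : basis_forced e r.
  move=> R [hR hm].
  have hres : resb e R by apply/RE.
  have hb : metric_basis e (sig @: R).
    split.
      apply/RE; apply/forallP => x; apply/forallP => y; apply/implyP => /and3P [nxy hx hy].
      have hx' : sig x \notin R by apply: contra hx => h; rewrite -(sigK x); apply: imset_f.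
      have hy' : sig y \notin R by apply: contra hy => h; rewrite -(sigK y); apply: imset_f.
      have nxy' : sig x != sig y by apply: contra nxy => /eqP /sinj ->.
      have [r' hr' hne] := resbE hres nxy' hx' hy'.
      apply/exists_inP; exists (sig r'); first exact: imset_f.
      by rewrite -(sigE (sig r') x) -(sigE (sig r') y) !sigK.
    by move=> S hS; rewrite card_imset //; apply: hm.
  have := hfv _ hb; case/imsetP => w hw E.
  have : sig v = sig (sig w) by rewrite E.
  rewrite sigK /sig; crunch.
  by move=> ->.
move=> w; split; last by case=> ->.
move=> hfw.
have [R' [_ [x1' [x2' [y2' [r' [_ hco']]]]]]] := forced_core hd hfw.
have [[_ _ _ _ _] [[_ e7 e8 _ e10] [g1 g2 g3 g4 _]]] := hco'.
have := Hsupp g1; rewrite !inE => /orP [/eqP E|/orP [/eqP E|/orP [/eqP E|/orP [/eqP E|/eqP E]]]]; subst w.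
- move: g1 g2; rewrite !Hchar; crunch.
  by move=> /eqP E1 /eqP E2; subst; rewrite eqxx in e8.
- by left.
- move: g2; rewrite Hchar; crunch; case/orP => /eqP E; subst x2'.
    move: g3; rewrite Hchar; crunch => /eqP E; subst r'.
    by move: g4; rewrite Hchar; crunch.
  move: g3; rewrite Hchar; crunch => /eqP E; subst r'.
  by move: g4; rewrite Hchar; crunch.
- by right.
- move: g1 g2; rewrite !Hchar; crunch.
  by move=> /eqP E1 /eqP E2; subst; rewrite eqxx in e8.
Qed.

End Exact.
End Main.

Theorem theorem7 (T : finType) (e : rel T) :
  simple_graph e -> connected_graph e -> 6 <= #|T| ->
  (exists v : T, basis_forced e v) ->
  #|edge_set e| <= #|T| * (#|T| - 1) %/ 2 - 4 /\
  (#|edge_set e| = #|T| * (#|T| - 1) %/ 2 - 4 ->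
     graph_iso (compl_rel e) (@P5_plus_isolated #|T|) /\
     exists v1 v2 : T, v1 != v2 /\
       forall v : T, basis_forced e v <-> v = v1 \/ v = v2).
Proof.
move=> hs _ hT [v0 hf0].
have EC := edge_count hs.
have C4 : 4 <= #|T| * (#|T| - 1) %/ 2.
  have h30 : 30 <= #|T| * (#|T| - 1).
    by apply: (leq_trans (_ : 6 * 5 <= 6 * (#|T| - 1))); [rewrite leq_mul2l; lia | rewrite leq_mul2r hT orbT].
  by rewrite (leq_trans _ (leq_div2r 2 h30)).
have ge4 : 4 <= #|edge_set (compl_rel e)|.
  case: (leqP 4 #|edge_set (compl_rel e)|) => // hlt.
  have hd := get_diam2 hs (ltnW hlt) hT.
  have [R [_ [x1 [x2 [y2 [r [_ hco]]]]]]] := forced_core hs hT hd hf0.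
  have [us sub] := four_edges hco.
  have sub' : {subset [:: [set v0; x1]; [set v0; x2]; [set r; x2]; [set r; y2]]
                 <= enum (edge_set (compl_rel e))}.
    by move=> A /sub; rewrite mem_enum.
  by have := uniq_leq_size us sub'; rewrite -cardE /= => h; move: hlt; rewrite ltnNge h.
split; first lia.
move=> hE.
have hF : #|edge_set (compl_rel e)| = 4 by lia.
have hd := get_diam2 hs (eq_leq hF) hT.
have [R [_ [x1 [x2 [y2 [r [_ hco]]]]]]] := forced_core hs hT hd hf0.
split; first by have := iso_P5 hs hco hF.
exists v0, r; split; last by have := forced_pair hs hT hco hF hd hf0.
by have [_ [[_ d7 _ _ _] _]] := hco; rewrite eq_sym.
Qed.
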